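(* Suppose the market satisfies the bounded-ratio assumption. Let $\Theta$ be a totally bounded subset of $L^\infty(\Delta_n,\overline{\Delta}_n)$ (with the supremum metric) and let $\nu_0$ be any Borel probability measure on $\Theta$ with full support. Then $\lim_{t\to\infty}\frac1t\log\frac{\widehat V(t)}{V^*(t)}=0$, i.e. Cover's portfolio satisfies the universality property.
   Context: $n\ge2$; $\Delta_n$, $\overline{\Delta}_n$ the open and closed unit simplices in $\mathbb R^n$. Bounded-ratio assumption: the market weight sequence $\{\mu(t)\}_{t\ge0}\subset\Delta_n$ satisfies $\frac1M\le\mu_i(t+1)/\mu_i(t)\le M$ for some constant $M>0$ and all $i,t$. $L^\infty(\Delta_n,\overline{\Delta}_n)$ is the set of maps $\Delta_n\to\overline{\Delta}_n$ with metric $\|\pi-\eta\|_\infty=\sup_p|\pi(p)-\eta(p)|$; $\Theta$ carries the induced topology, and $(p,\pi)\mapsto\pi(p)$ is assumed jointly measurable. Relative value: $V_\pi(0)=1$, $V_\pi(t+1)=V_\pi(t)\sum_i\pi_i(\mu(t))\mu_i(t+1)/\mu_i(t)$. $\widehat V(t)=\int_\Theta V_\pi(t)\,d\nu_0(\pi)$ (the relative value of Cover's portfolio $\widehat\pi(t)=\int\pi(\mu(t))\,d\nu_t(\pi)$, $\nu_t\propto V_\pi(t)\nu_0$), and $V^*(t)=\sup_{\pi\in\Theta}V_\pi(t)$. Full support: the smallest closed set of full measure is $\Theta$. *)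

(* Defs.v *)
From HB Require Import structures.
From mathcomp Require Import all_boot all_order all_algebra.
From mathcomp Require Import all_classical all_reals all_analysis.
Unset Printing Implicit Defensive.
Import Order.TTheory GRing.Theory Num.Theory.
Local Open Scope classical_set_scope.
Local Open Scope ring_scope.

(* Vectors of R^n are represented as n.-tuple R (which carries the product,
   i.e. Borel, sigma-algebra in MathComp-Analysis). *)

Definition open_simplex (R : realType) (n : nat) : set (n.-tuple R) :=
  [set p | (forall i : 'I_n, 0 < tnth p i) /\ \sum_(i < n) tnth p i = 1].

Definition closed_simplex (R : realType) (n : nat) : set (n.-tuple R) :=
  [set p | (forall i : 'I_n, 0 <= tnth p i) /\ \sum_(i < n) tnth p i = 1].

Definition vdist (R : realType) (n : nat) (x y : n.-tuple R) : R :=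
  Num.sqrt (\sum_(i < n) (tnth x i - tnth y i) ^+ 2).

Definition supdist (R : realType) (n : nat)
    (f g : n.-tuple R -> n.-tuple R) : R :=
  sup [set vdist R n (f p) (g p) | p in open_simplex R n].

(* elements of L^infty(Delta_n, closed Delta_n), as total functions whose
   values on Delta_n lie in the closed simplex (only values on Delta_n matter) *)
Definition Linf_map (R : realType) (n : nat) (f : n.-tuple R -> n.-tuple R) :=
  forall p, open_simplex R n p -> closed_simplex R n (f p).

Definition dist_open (R : realType) (T : Type) (dist : T -> T -> R)
    (U : set T) : Prop :=
  forall a, U a -> exists2 e : R, 0 < e & forall b, dist a b < e -> U b.

Definition dist_closed (R : realType) (T : Type) (dist : T -> T -> R)
    (C : set T) : Prop := dist_open R T dist (~` C).

Fixpoint relvalue (R : realType) (n : nat) (mu : nat -> n.-tuple R)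
    (pi : n.-tuple R -> n.-tuple R) (t : nat) : R :=
  match t with
  | 0 => 1
  | t'.+1 => relvalue R n mu pi t' *
      \sum_(i < n) tnth (pi (mu t')) i * (tnth (mu t'.+1) i / tnth (mu t') i)
  end.

(* Main.v *)
Require Import Defs.
From HB Require Import structures.
From mathcomp Require Import all_boot all_order all_algebra.
From mathcomp Require Import all_classical all_reals all_analysis.
From mathcomp Require Import measurable_realfun ring lra.
Import Order.TTheory GRing.Theory Num.Theory.
Local Open Scope classical_set_scope.
Local Open Scope ring_scope.
Definition stepv (R : realType) (n : nat) (mu : nat -> n.-tuple R)
  (f : n.-tuple R -> n.-tuple R) (s : nat) : R :=
  \sum_(i < n) tnth (f (mu s)) i * (tnth (mu s.+1) i / tnth (mu s) i).

Set Implicit Arguments. Unset Strict Implicit.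

Lemma relvalueS (R : realType) n mu f t :
  relvalue R n mu f t.+1 = relvalue R n mu f t * stepv R n mu f t.
Proof. by []. Qed.

Lemma step_bounds (R : realType) (n : nat) (mu : nat -> n.-tuple R)
    (hmu : forall t, open_simplex R n (mu t)) (M : R)
    (hratio : forall (t : nat) (i : 'I_n),
        M^-1 <= tnth (mu t.+1) i / tnth (mu t) i <= M)
    f (hf : Linf_map R n f) s :
  M^-1 <= stepv R n mu f s <= M.
Proof.
have [hpos hsum] := hf _ (hmu s).
apply/andP; split.
- rewrite -[M^-1]mul1r -hsum mulr_suml /stepv.
  apply: ler_sum => i _; apply: ler_wpM2l => //.
  by case/andP: (hratio s i).
- rewrite -[M]mul1r -hsum mulr_suml /stepv.
  apply: ler_sum => i _; apply: ler_wpM2l => //.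
  by case/andP: (hratio s i).
Qed.

Lemma step_lip (R : realType) (n : nat) (mu : nat -> n.-tuple R)
    (hmu : forall t, open_simplex R n (mu t)) (M : R) (hM : 0 < M)
    (hratio : forall (t : nat) (i : 'I_n),
        M^-1 <= tnth (mu t.+1) i / tnth (mu t) i <= M)
    f g (hf : Linf_map R n f) (hg : Linf_map R n g) s (delta : R)
    (hd : 0 <= delta)
    (hfg : forall i, `|tnth (f (mu s)) i - tnth (g (mu s)) i| <= delta) :
  stepv R n mu g s * (1 - n%:R * M ^+ 2 * delta) <= stepv R n mu f s.
Proof.
have hdiff : stepv R n mu g s - stepv R n mu f s <= n%:R * delta * M.
  rewrite /stepv -sumrB.
  have -> : n%:R * delta * M = \sum_(i < n) delta * M.
    by rewrite sumr_const card_ord -mulr_natl; ring.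
  apply: ler_sum => i _; rewrite -mulrBl.
  case/andP: (hratio s i) => h1 h2.
  have hr0 : 0 <= tnth (mu s.+1) i / tnth (mu s) i.
    by apply: le_trans h1; rewrite invr_ge0 ltW.
  apply: le_trans (ler_wpM2r hr0 (_ : _ <= delta)) _.
    by apply: le_trans (ler_norm _) _; rewrite distrC.
  by apply: ler_wpM2l.
have [hs1 _] := andP (step_bounds hmu hratio hg s).
have hMi : M^-1 * (n%:R * M ^+ 2 * delta) = n%:R * delta * M.
  by rewrite expr2; field; rewrite gt_eqF.
have hge : 0 <= n%:R * M ^+ 2 * delta by rewrite !mulr_ge0 // ltW.
rewrite mulrBr mulr1.
have : M^-1 * (n%:R * M ^+ 2 * delta) <= stepv R n mu g s * (n%:R * M ^+ 2 * delta).
  exact: ler_wpM2r.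
rewrite hMi => h; lra.
Qed.

Lemma relvalue_gt0 (R : realType) (n : nat) (mu : nat -> n.-tuple R)
    (hmu : forall t, open_simplex R n (mu t)) (M : R) (hM : 0 < M)
    (hratio : forall (t : nat) (i : 'I_n),
        M^-1 <= tnth (mu t.+1) i / tnth (mu t) i <= M)
    f (hf : Linf_map R n f) t :
  0 < relvalue R n mu f t <= M ^+ t.
Proof.
elim: t => [|t /andP[IH1 IH2]] /=; first by rewrite ltr01 expr0 lexx.
have [h1 h2] := andP (step_bounds hmu hratio hf t).
have hs : 0 < stepv R n mu f t by apply: lt_le_trans h1; rewrite invr_gt0.
apply/andP; split; first exact: mulr_gt0.
rewrite exprS mulrC; apply: ler_pM => //; exact: ltW.
Qed.

Lemma relvalue_lip (R : realType) (n : nat) (mu : nat -> n.-tuple R)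
    (hmu : forall t, open_simplex R n (mu t)) (M : R) (hM : 0 < M)
    (hratio : forall (t : nat) (i : 'I_n),
        M^-1 <= tnth (mu t.+1) i / tnth (mu t) i <= M)
    f g (hf : Linf_map R n f) (hg : Linf_map R n g) (delta : R)
    (hd : 0 <= delta) (hq : 0 <= 1 - n%:R * M ^+ 2 * delta)
    (hfg : forall p, open_simplex R n p -> forall i,
       `|tnth (f p) i - tnth (g p) i| <= delta) t :
  relvalue R n mu g t * (1 - n%:R * M ^+ 2 * delta) ^+ t <= relvalue R n mu f t.
Proof.
elim: t => [|t IH]; first by rewrite expr0 mulr1.
rewrite !relvalueS exprS.
set q := 1 - _.
have -> : relvalue R n mu g t * stepv R n mu g t * (q * q ^+ t)
  = (relvalue R n mu g t * q ^+ t) * (stepv R n mu g t * q) by ring.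
apply: ler_pM => //.
- by apply: mulr_ge0 => //; [apply: ltW; case/andP: (relvalue_gt0 hmu hM hratio hg t)|apply: exprn_ge0].
- apply: mulr_ge0 => //.
  have [h1 _] := andP (step_bounds hmu hratio hg t).
  by apply: le_trans h1; rewrite invr_ge0 ltW.
- by apply: step_lip => //; apply: hfg.
Qed.

Lemma term_le_sum (R : realType) (n : nat) (F : 'I_n -> R) i :
  (forall j, 0 <= F j) -> F i <= \sum_(j < n) F j.
Proof.
move=> h; rewrite (bigD1 i) //= lerDl; exact: sumr_ge0.
Qed.

Lemma coord_le_vdist (R : realType) (n : nat) (x y : n.-tuple R) i :
  `|tnth x i - tnth y i| <= vdist R n x y.
Proof.
rewrite /vdist -sqrtr_sqr; apply: ler_wsqrtr.
apply: (@term_le_sum _ _ (fun j => (tnth x j - tnth y j) ^+ 2)) => j.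
exact: sqr_ge0.
Qed.

Lemma closed_coord (R : realType) (n : nat) (x : n.-tuple R) i :
  closed_simplex R n x -> 0 <= tnth x i <= 1.
Proof.
case=> h0 h1; rewrite h0 /= -h1.
exact: (@term_le_sum _ _ (fun j => tnth x j)).
Qed.

Lemma vdist_le_supdist (R : realType) (n : nat) f g
    (hf : Linf_map R n f) (hg : Linf_map R n g) p :
  open_simplex R n p -> vdist R n (f p) (g p) <= supdist R n f g.
Proof.
move=> hp; apply: ub_le_sup; last by exists p.
exists (Num.sqrt n%:R) => _ [q hq <-].
rewrite /vdist; apply: ler_wsqrtr.
have -> : n%:R = \sum_(j < n) (1 : R) by rewrite sumr_const card_ord.
apply: ler_sum => j _.
have /andP[a1 a2] := closed_coord j (hf _ hq).
have /andP[b1 b2] := closed_coord j (hg _ hq).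
set u := tnth (f q) j - tnth (g q) j.
have hu1 : u <= 1 by rewrite /u; lra.
have hu2 : -1 <= u by rewrite /u; lra.
rewrite expr2; nra.
Qed.

Lemma open_simplex_measurable (R : realType) (n : nat) :
  measurable (open_simplex R n).
Proof.
have -> : open_simplex R n =
    (\bigcap_(i in [set: 'I_n]) ((fun p : n.-tuple R => tnth p i) @^-1` `]0, +oo[))
    `&` ((fun p : n.-tuple R => \sum_(i < n) tnth p i) @^-1` [set 1]).
  apply/seteqP; split => p /=.
  - by case=> h1 h2; split => // i _ /=; rewrite in_itv /= andbT h1.
  - case=> h1 h2; split => // i; have := h1 i I; by rewrite /= in_itv /= andbT.
apply: measurableI.
- apply: fin_bigcap_measurable; first exact: finite_finset.
  move=> i _; rewrite -[X in measurable X]setTI.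
  by apply: measurable_tnth => //; exact: measurable_itv.
- rewrite -[X in measurable X]setTI.
  have ms : measurable_fun [set: n.-tuple R] (fun p : n.-tuple R => \sum_(i < n) tnth p i).
    by apply: measurable_sum => i; exact: measurable_tnth.
  by apply: ms => //; exact: measurable_set1.
Qed.

Lemma pi_coord_measurable (R : realType) (n : nat) (mu : nat -> n.-tuple R)
    (hmu : forall t, open_simplex R n (mu t))
    (d : measure_display) (T : measurableType d)
    (pi : T -> n.-tuple R -> n.-tuple R)
    (hjoint : measurable_fun
        [set x : n.-tuple R * T | open_simplex R n x.1]
        (fun x : n.-tuple R * T => pi x.2 x.1)) s (i : 'I_n) :
  measurable_fun [set: T] (fun th => tnth (pi th (mu s)) i).
Proof.
have mD : measurable [set x : n.-tuple R * T | open_simplex R n x.1].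
  have -> : [set x : n.-tuple R * T | open_simplex R n x.1] =
      open_simplex R n `*` [set: T].
    by apply/seteqP; split => x /=; [move=> h; split|case].
  apply: measurableX => //; exact: open_simplex_measurable.
have mg : measurable_fun [set: T] (fun th => pi th (mu s)).
  have := @measurable_comp _ _ _ T (n.-tuple R * T)%type (n.-tuple R) _
    (fun x : n.-tuple R * T => pi x.2 x.1) [set: T] (fun th => (mu s, th)) mD.
  apply; [|exact: hjoint|exact: pair1_measurable].
  by move=> _ [th _ <-] /=; exact: hmu.
exact: (measurableT_comp (measurable_tnth i) mg).
Qed.

Lemma relvalue_measurable (R : realType) (n : nat) (mu : nat -> n.-tuple R)
    (hmu : forall t, open_simplex R n (mu t))
    (d : measure_display) (T : measurableType d)
    (pi : T -> n.-tuple R -> n.-tuple R)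
    (hjoint : measurable_fun
        [set x : n.-tuple R * T | open_simplex R n x.1]
        (fun x : n.-tuple R * T => pi x.2 x.1)) t :
  measurable_fun [set: T] (fun th => relvalue R n mu (pi th) t).
Proof.
elim: t => [|t IH]; first exact: measurable_cst.
rewrite /=; apply: measurable_funM => //.
apply: (@measurable_sum _ _ _ _ _ _ (fun (i : 'I_n) th =>
  tnth (pi th (mu t)) i * (tnth (mu t.+1) i / tnth (mu t) i))) => i.
apply: (@measurable_funM _ _ _ _ (fun th => tnth (pi th (mu t)) i)
  (fun _ => tnth (mu t.+1) i / tnth (mu t) i)); last exact: measurable_cst.
exact: (pi_coord_measurable hmu hjoint t i).
Qed.

Unset Implicit Arguments.

Theorem lemma3p5 (R : realType) (n : nat) (hn : (2 <= n)%N)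
    (mu : nat -> n.-tuple R) (hmu : forall t, open_simplex R n (mu t))
    (M : R) (hM : 0 < M)
    (hratio : forall (t : nat) (i : 'I_n),
        M^-1 <= tnth (mu t.+1) i / tnth (mu t) i <= M)
    (d : measure_display) (T : measurableType d)
    (pi : T -> n.-tuple R -> n.-tuple R)
    (hpi : forall th, Linf_map R n (pi th))
    (hinj : forall a b, (forall p, open_simplex R n p -> pi a p = pi b p) -> a = b)
    (hborel : @measurable d T =
        <<s [set U : set T | dist_open R T (fun a b => supdist R n (pi a) (pi b)) U] >>)
    (htotbdd : forall e : R, 0 < e ->
        exists (k : nat) (c : 'I_k -> n.-tuple R -> n.-tuple R),
          (forall j, Linf_map R n (c j)) /\
          forall th : T, exists j, supdist R n (pi th) (c j) < e)
    (hjoint : measurable_fun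
        [set x : n.-tuple R * T | open_simplex R n x.1]
        (fun x : n.-tuple R * T => pi x.2 x.1))
    (nu0 : probability T R)
    (hsupp : forall C : set T,
        dist_closed R T (fun a b => supdist R n (pi a) (pi b)) C ->
        nu0 C = 1%E -> C = setT) :
  let Vhat t := fine (\int[nu0]_(th in setT) (relvalue R n mu (pi th) t)%:E) in
  let Vstar t := sup [set relvalue R n mu (pi th) t | th in [set: T]] in
  (fun t : nat => (t%:R)^-1 * ln (Vhat t / Vstar t)) @ \oo --> 0.
Proof.
move=> Vhat Vstar.
have rvb th t : 0 < relvalue R n mu (pi th) t <= M ^+ t.
  exact: (relvalue_gt0 hmu hM hratio (hpi th) t).
have [th0 _] : exists th : T, True.
  apply: contrapT => hno.
  have hT : [set: T] = set0.
    by apply/seteqP; split => // x _; apply: hno; exists x.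
  have := probability_setT nu0; rewrite hT measure0 => h.
  have : (0%:E < (1%:E : \bar R))%E by rewrite lte_fin ltr01.
  by rewrite -h ltxx.
have hubd t : has_ubound [set relvalue R n mu (pi th) t | th in [set: T]].
  by exists (M ^+ t) => _ [th _ <-]; case/andP: (rvb th t).
have rv_le t th : relvalue R n mu (pi th) t <= Vstar t.
  by apply: ub_le_sup => //; exists th.
have Vstar_gt0 t : 0 < Vstar t.
  by apply: lt_le_trans (rv_le t th0); case/andP: (rvb th0 t).
have mrv t : measurable_fun [set: T] (fun th => (relvalue R n mu (pi th) t)%:E).
  by apply/measurable_EFinP; exact: (relvalue_measurable hmu hjoint t).
have Ib t : (0 <= \int[nu0]_(th in setT) (relvalue R n mu (pi th) t)%:E <=
             (Vstar t)%:E)%E.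
  apply/andP; split.
    by apply: integral_ge0 => th _; rewrite lee_fin; have /andP[hh _] := rvb th t; exact: ltW.
  have := integral_cst nu0 (@measurableT _ T) (Vstar t)%:E.
  have P1 : nu0 [set: T] = 1%E by exact: probability_setT.
  move=> hc.
  rewrite [X in (_ * X)%E](_ : _ = 1%E) ?mule1 in hc; last exact: probability_setT.
  rewrite -hc.
  apply: ge0_le_integral => //.
  - by move=> th _; rewrite lee_fin; have /andP[hh _] := rvb th t; exact: ltW.
  - by move=> th _ /=; rewrite lee_fin; exact: rv_le.
have IE t : (\int[nu0]_(th in setT) (relvalue R n mu (pi th) t)%:E = (Vhat t)%:E)%E.
  have [h1 h2] := andP (Ib t).
  rewrite /Vhat fineK // ge0_fin_numE //.
  exact: le_lt_trans h2 (ltry _).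
have Vhat_le t : Vhat t <= Vstar t by have := (andP (Ib t)).2; rewrite IE lee_fin.
have key : forall e : R, 0 < e -> 0 <= 1 - n%:R * M ^+ 2 * (2 * e) ->
    exists2 del : R, 0 < del & forall t,
      del * (1 - n%:R * M ^+ 2 * (2 * e)) ^+ t * Vstar t <= Vhat t.
  move=> e he hq.
  have [k [c [hc hcov]]] := htotbdd e he.
  pose B (j : 'I_k) := [set th : T | exists2 r : R, r < e & forall p,
    open_simplex R n p -> forall i, `|tnth (pi th p) i - tnth (c j p) i| <= r].
  have Bopen j : dist_open R T (fun a b => supdist R n (pi a) (pi b)) (B j).
    move=> a [r hr ha].
    exists ((e - r) / 2); first by rewrite divr_gt0 // subr_gt0.
    move=> b hab; exists (r + (e - r) / 2); first lra.
    move=> p hp i.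
    have h1 : `|tnth (pi a p) i - tnth (pi b p) i| <= supdist R n (pi a) (pi b).
      exact: le_trans (@coord_le_vdist _ _ (pi a p) (pi b p) i)
        (vdist_le_supdist (hpi a) (hpi b) hp).
    have h2 := ha p hp i.
    have h3 := ler_distD (tnth (pi a p) i) (tnth (pi b p) i) (tnth (c j p) i).
    rewrite distrC in h1; lra.
  have mB j : measurable (B j).
    by rewrite hborel; apply: sub_sigma_algebra; exact: Bopen j.
  have Bcov th : exists j, B j th.
    have [j hj] := hcov th; exists j; exists (supdist R n (pi th) (c j)) => // p hp i.
    exact: le_trans (@coord_le_vdist _ _ (pi th p) (c j p) i)
      (vdist_le_supdist (hpi th) (hc j) hp).
  have Bpos j th : B j th -> (0 < nu0 (B j))%E.
    move=> hth; rewrite lt0e measure_ge0 andbT; apply/negP => /eqP h0.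
    have hC : ~` B j = setT.
      apply: hsupp.
      - by rewrite /dist_closed setCK; exact: Bopen.
      - by rewrite probability_setC // h0 sube0.
    have : (~` B j) th by rewrite hC.
    by [].
  pose w j := if (0 < nu0 (B j))%E then fine (nu0 (B j)) else 1.
  have fB j : nu0 (B j) = (fine (nu0 (B j)))%:E.
    rewrite fineK // ge0_fin_numE //.
    exact: le_lt_trans (probability_le1 nu0 (mB j)) (ltry _).
  have w01 j : 0 < w j <= 1.
    rewrite /w; case: ifPn => h; last by rewrite ltr01 lexx.
    rewrite fB lte_fin in h; rewrite h /= -lee_fin -fB.
    exact: probability_le1.
  exists (\prod_(j < k) w j / 2).
    apply: divr_gt0 => //; apply: prodr_gt0 => j _; by case/andP: (w01 j).
  move=> t.
  set q := 1 - _.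
  have hVs := Vstar_gt0 t.
  have hsup : has_sup [set relvalue R n mu (pi th) t | th in [set: T]].
    by split; [exists (relvalue R n mu (pi th0) t); exists th0|exact: hubd].
  have [x [th _ hxe] hx] := sup_adherent (divr_gt0 hVs (ltr0n R 2)) hsup.
  rewrite -hxe in hx.
  have [j hj] := Bcov th.
  have hpos := Bpos j th hj.
  have hw : w j = fine (nu0 (B j)) by rewrite /w hpos.
  have hlow th' : B j th' ->
      relvalue R n mu (pi th) t * q ^+ t <= relvalue R n mu (pi th') t.
    move=> hth'.
    apply: (relvalue_lip hmu hM hratio (hpi th') (hpi th) _ hq) => [|p hp i].
      by rewrite mulr_ge0 // ltW.
    case: hj => r1 hr1 h1; case: hth' => r2 hr2 h2.
    have := h1 p hp i; have := h2 p hp i.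
    have := ler_distD (tnth (c j p) i) (tnth (pi th' p) i) (tnth (pi th p) i).
    rewrite (distrC (tnth (c j p) i) (tnth (pi th p) i)).
    move=> *; lra.
  have hq0 : 0 <= q ^+ t by apply: exprn_ge0.
  have hrv0 : 0 <= relvalue R n mu (pi th) t.
    by have /andP[hh _] := rvb th t; exact: ltW.
  have hint : ((relvalue R n mu (pi th) t * q ^+ t * w j)%:E <= (Vhat t)%:E)%E.
    rewrite -IE EFinM hw -fB.
    apply: (@le_trans _ _ (\int[nu0]_(th' in B j) (relvalue R n mu (pi th') t)%:E)%E).
      rewrite -integral_cst //; apply: ge0_le_integral => //.
      - by move=> th' _ /=; rewrite lee_fin mulr_ge0.
      - exact: (measurable_funS measurableT _ (mrv t)).
    apply: ge0_subset_integral => //.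
    by move=> th' _; rewrite lee_fin; have /andP[hh _] := rvb th' t; exact: ltW.
  rewrite lee_fin in hint; apply: le_trans hint.
  have hP : \prod_(j0 < k) w j0 <= w j.
    rewrite (bigD1 j) //=; apply: ler_piMr.
      by case/andP: (w01 j) => /ltW.
    by apply: prodr_ile1 => j0 _; case/andP: (w01 j0) => /ltW -> ->.
  have hP0 : 0 <= \prod_(j0 < k) w j0.
    by apply: prodr_ge0 => j0 _; case/andP: (w01 j0) => /ltW.
  have hw0 : 0 < w j by case/andP: (w01 j).
  set P := \prod_(j0 < k) w j0 in hP hP0 *.
  rewrite /= in hx.
  move: hx hrv0; set xv := relvalue R n mu (pi th) t => hx hrv0.
  have {}hx : Vstar t - Vstar t / 2 < xv by exact: hx.
  have e1 : P * Vstar t <= w j * Vstar t by apply: ler_wpM2r => //; exact: ltW.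
  have e2 : w j * (Vstar t / 2) <= w j * xv.
    by apply: ler_wpM2l; [exact: ltW|lra].
  have e3 : P / 2 * Vstar t <= xv * w j by lra.
  have -> : P / 2 * q ^+ t * Vstar t = q ^+ t * (P / 2 * Vstar t) by ring.
  have -> : xv * q ^+ t * w j = q ^+ t * (xv * w j) by ring.
  exact: ler_wpM2l.
apply/cvgrPdist_le => eps heps.
have hnM : 0 < n%:R * M ^+ 2.
  apply: mulr_gt0; last exact: exprn_gt0.
  by rewrite ltr0n; apply: leq_trans hn.
pose e := eps / (2 + eps) / (2 * (n%:R * M ^+ 2)).
have he : 0 < e.
  rewrite /e; apply: divr_gt0; last by apply: mulr_gt0.
  apply: divr_gt0 => //; lra.
have hqe : 1 - n%:R * M ^+ 2 * (2 * e) = 2 / (2 + eps).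
  have h2e : 2 + eps != 0 by rewrite gt_eqF //; lra.
  have hn0 : n%:R != 0 :> R by rewrite pnatr_eq0 -lt0n; apply: leq_trans hn.
  rewrite /e; field.
  by rewrite h2e hn0 gt_eqF.
have hq : 0 <= 1 - n%:R * M ^+ 2 * (2 * e).
  rewrite hqe; apply: divr_ge0 => //; lra.
have [del hdel hkey] := key e he hq.
move: hkey; rewrite hqe; set q := 2 / (2 + eps) => hkey.
have hq0 : 0 < q by rewrite /q; apply: divr_gt0 => //; lra.
have hlnq : - (eps / 2) <= ln q.
  have hqi : q = (1 + eps / 2)^-1 by rewrite /q; field; lra.
  have h1 : 0 < 1 + eps / 2 by lra.
  rewrite hqi lnV ?posrE //.
  rewrite lerN2; apply: le_ln1Dx; lra.
pose z := 2 * ln del / eps.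
pose N := (Num.trunc `|z|).+1.
exists N => // t /= hNt.
have hzt : `|z| < t%:R.
  apply: lt_le_trans (truncnS_gt _) _.
  by rewrite ler_nat.
have ht : 0 < t%:R :> R by apply: le_lt_trans hzt.
have hz : - t%:R < z by move: hzt; rewrite ltr_norml => /andP[].
have hdelz : ln del = z * eps / 2 by rewrite /z; field; lra.
have hlndel : - (t%:R * eps / 2) < ln del.
  rewrite hdelz; nra.
have hVs := Vstar_gt0 t.
have hk := hkey t.
have hqt : 0 < q ^+ t by apply: exprn_gt0.
have hdq : 0 < del * q ^+ t by apply: mulr_gt0.
have hVh : 0 < Vhat t.
  by apply: lt_le_trans hk; apply: mulr_gt0.
have hrho : 0 < Vhat t / Vstar t by apply: divr_gt0.
have hrho1 : Vhat t / Vstar t <= 1 by rewrite ler_pdivrMr // mul1r.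
have hrhol : del * q ^+ t <= Vhat t / Vstar t by rewrite ler_pdivlMr.
have hL0 : ln (Vhat t / Vstar t) <= 0 by apply: ln_le0.
have hL1 : ln (del * q ^+ t) <= ln (Vhat t / Vstar t).
  by rewrite ler_ln ?posrE.
rewrite lnM ?posrE // lnXn // -mulr_natl in hL1.
have hqq : t%:R * (- (eps / 2)) <= t%:R * ln q by apply: ler_wpM2l => //; exact: ltW.
rewrite sub0r normrN normrM ger0_norm; last by rewrite invr_ge0 ltW.
rewrite ler0_norm // ler_pdivrMl //.
lra.
Qed.
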